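(* Let $n\ge 6$ be even and let $L$ be a Latin square of order $n$ with inner distance $\frac n2-1$. If some row of $L$ has extended difference row equal to Row A, then $L$ is a row product.
   Context: Symbols are $[1,n]$; $\mathrm{dist}(a,b)$ is the minimum of the residues of $a-b$ and $b-a$ mod $n$ (in $[0,n-1]$). A Latin square of order $n$ is an $n\times n$ matrix $(m_{i,j})$ over $[1,n]$ with each symbol exactly once per row and column; its inner distance is the minimum of $\mathrm{dist}$ over symbols in horizontally or vertically adjacent cells. For a Latin row $(s_1,\dots,s_n)$, with $h_j\in[0,n-1]$, $h_j\equiv s_{j+1}-s_j\pmod n$ ($1\le j\le n-1$) and $h_n\equiv s_1-s_n\pmod n$, its difference row is $(h_1,\dots,h_{n-1})$ and its extended difference row is $(\epsilon_1,\dots,\epsilon_{n-1},h)$ with $\epsilon_j=h_j-\frac n2$, $h=h_n-\frac n2$ (integers). Row A is the extended difference row $(0,1,0,1,\dots,1,0,1-\frac n2)$, whose first $n-1$ entries alternate $0,1$ starting and ending with $0$. For $L$, $H$ is the $n\times(n-1)$ matrix with $h_{i,j}\equiv m_{i,j+1}-m_{i,j}$ and $V$ the $(n-1)\times n$ matrix with $v_{i,j}\equiv m_{i+1,j}-m_{i,j}$ (mod $n$). A row product is a Latin square obtained by adding a constant mod $n$ to all entries of $\mathrm{prod}(d,d')$, the $n\times n$ matrix with $1$ in cell $(1,1)$ whose $H$ has every row equal to a difference row $d$ and whose $V$ has every column equal to a difference row $d'$. *)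

(* Defs.v *)
(* Conventions: a Latin square of order n is a function
   L : nat -> nat -> nat, read on 0-based indices i, j < n (cell (i,j) here is
   cell (i+1,j+1) of the paper); symbols are the naturals in [1,n]. *)
From mathcomp Require Import all_boot all_order all_algebra.
Set Implicit Arguments.
Unset Strict Implicit.
Unset Printing Implicit Defensive.
Import GRing.Theory Num.Theory.

Definition mdiff (n a b : nat) : nat := absz ((Posz b - Posz a)%R %% Posz n)%Z.

Definition dist (n a b : nat) : nat := minn (mdiff n b a) (mdiff n a b).

Definition latin_row (n : nat) (s : nat -> nat) : Prop :=
  (forall j, j < n -> 1 <= s j <= n) /\
  (forall j k, j < n -> k < n -> s j = s k -> j = k).

Definition latin_square (n : nat) (L : nat -> nat -> nat) : Prop :=
  (forall i, i < n -> latin_row n (fun j => L i j)) /\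
  (forall j, j < n -> latin_row n (fun i => L i j)).

Definition inner_distance (n : nat) (L : nat -> nat -> nat) : nat :=
  minn (\big[minn/n]_(i < n) \big[minn/n]_(j < n.-1) dist n (L i j) (L i j.+1))
       (\big[minn/n]_(i < n.-1) \big[minn/n]_(j < n) dist n (L i j) (L i.+1 j)).

(* difference row (h_1,...,h_{n-1}) of a row s, 0-based: entry j < n-1 is
   the residue of s_{j+1} - s_j *)
Definition diff_row (n : nat) (s : nat -> nat) (j : nat) : nat :=
  mdiff n (s j) (s j.+1).

(* extended difference row (eps_1,...,eps_{n-1},h), 0-based: entries
   j < n-1 are h_j - n/2, entry n-1 is h_n - n/2 where h_n = s_1 - s_n mod n *)
Definition ext_diff_row (n : nat) (s : nat -> nat) (j : nat) : int :=
  if j < n.-1 then (Posz (diff_row n s j) - Posz n./2)%R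
  else (Posz (mdiff n (s n.-1) (s 0)) - Posz n./2)%R.

Definition rowA (n : nat) (j : nat) : int :=
  if j < n.-1 then Posz (odd j) else (1 - Posz n./2)%R.

(* representative in [1,n] of x modulo n *)
Definition to_sym (n x : nat) : nat := (x + n.-1) %% n + 1.

(* prod(d,d'): entry 1 at (1,1), every row of H equal to d, every column of
   V equal to d' *)
Definition prodm (n : nat) (d d' : nat -> nat) (i j : nat) : nat :=
  to_sym n (1 + \sum_(k < i) d' k + \sum_(k < j) d k).

(* L is a row product: L = prod(d,d') + c (mod n) for difference rows d, d'
   (i.e. difference rows of Latin rows s, t) and a constant c *)
Definition row_product (n : nat) (L : nat -> nat -> nat) : Prop :=
  exists (s t : nat -> nat) (c : nat),
    latin_row n s /\ latin_row n t /\
    forall i j, i < n -> j < n ->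
      L i j = to_sym n (prodm n (diff_row n s) (diff_row n t) i j + c).

(* Main.v *)
Require Import Defs.
From mathcomp Require Import all_boot all_order all_algebra.
From mathcomp Require Import zify.
Set Implicit Arguments.
Unset Strict Implicit.
Unset Printing Implicit Defensive.
Import GRing.Theory Num.Theory.
Local Open Scope ring_scope.

Lemma mono_up (f : nat -> int) (m : nat) :
  (forall k, (k.+1 < m)%N -> f k <= f k.+1) ->
  forall i j, (i <= j)%N -> (j < m)%N -> f i <= f j.
Proof.
move=> H i j; elim: j => [|j IH] hij hjm.
  by have -> : i = 0%N by lia.
case: (ltngtP i j.+1) => h; [|lia|by rewrite h].
have h1 : f i <= f j by apply: IH; lia.
have h2 : f j <= f j.+1 by apply: H.
lia.
Qed.

Lemma core (m : nat) (e o : nat -> int) (c : int) :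
  (3 <= m)%N ->
  (forall k, (k < m)%N -> (e k = c \/ e k = c + 1) /\ (o k = c \/ o k = c + 1)) ->
  (forall k, (k.+1 < m)%N -> e k.+1 <= o k) ->
  (forall k, (k.+1 < m)%N -> k%:Z + e k != k.+1%:Z + e k.+1) ->
  (forall k, (k.+1 < m)%N -> k%:Z + o k != k.+1%:Z + o k.+1) ->
  (m.-1)%:Z + e m.-1 != m%:Z + o 0%N ->
  e 0%N != o m.-1 - 1 ->
  forall k, (k < m)%N -> e k = e 0%N /\ o k = e 0%N.
Proof.
move=> hm R H2 IE IO X1 X2.
have em : forall k, (k.+1 < m)%N -> e k <= e k.+1.
  move=> k hk; have := R k (ltnW hk); have := R k.+1 hk; have := IE k hk; lia.
have om : forall k, (k.+1 < m)%N -> o k <= o k.+1.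
  move=> k hk; have := R k (ltnW hk); have := R k.+1 hk; have := IO k hk; lia.
have R0 := R 0%N ltac:(lia).
have Rl := R m.-1 ltac:(lia).
case: R0 => [[e0|e0] _].
- have ol : o m.-1 = c by move: X2; rewrite e0; case: Rl => _; lia.
  have oc : forall k, (k < m)%N -> o k = c.
    move=> k hk; have := mono_up om (_ : (k <= m.-1)%N) (_ : (m.-1 < m)%N).
    have := R k hk; lia.
  move=> k hk; rewrite e0; split; last exact: oc.
  case: k hk => [|k] hk; first done.
  have := H2 k hk; have := oc k (ltnW hk); have := R k.+1 hk; lia.
- have ec : forall k, (k < m)%N -> e k = c + 1.
    move=> k hk; have := mono_up em (_ : (0 <= k)%N) hk.
    have := R k hk; lia.
  have o0 : o 0%N = c + 1.
    move: X1; rewrite ec; last lia. have := R 0%N ltac:(lia); lia.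
  move=> k hk; rewrite e0 ec //; split => //.
  have := mono_up om (_ : (0 <= k)%N) hk; have := R k hk; lia.
Qed.

Lemma wlem (m : nat) (e o : nat -> int) :
  (3 <= m)%N ->
  (forall k, (k < m)%N -> (-2 <= e k <= 2) /\ e k != 0 /\ (-2 <= o k <= 2) /\ o k != 0) ->
  (forall k, (k < m)%N -> -1 <= o k - e k <= 1) ->
  (forall k, (k.+1 < m)%N -> -2 <= e k.+1 - o k <= 0) ->
  (forall k k', (k < k')%N -> (k' < m)%N -> k%:Z + e k != k'%:Z + e k') ->
  (forall k k', (k < k')%N -> (k' < m)%N -> k%:Z + o k != k'%:Z + o k') ->
  (m.-1)%:Z + e m.-1 != m%:Z + o 0%N ->
  e 0%N != o m.-1 - 1 ->
  forall k, (k < m)%N -> e k = e 0%N /\ o k = e 0%N.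
Proof.
move=> hm R H1 H2 IE IO X1 X2.
have IEc : forall k, (k.+1 < m)%N -> k%:Z + e k != k.+1%:Z + e k.+1.
  by move=> k hk; apply: IE.
have IOc : forall k, (k.+1 < m)%N -> k%:Z + o k != k.+1%:Z + o k.+1.
  by move=> k hk; apply: IO.
have negp : forall k, (k < m)%N -> e k < 0 -> forall k', (k <= k')%N -> (k' < m)%N ->
    e k' < 0 /\ o k' < 0.
  move=> k hk hek k'; elim: k' => [|k' IH] hkk' hk'm.
    have k0 : k = 0%N by lia. subst k. by have := R 0%N hk'm; have := H1 0%N hk'm; lia.
  case: (ltngtP k k'.+1) => h; [|lia|].
  - have [a b] := IH ltac:(lia) ltac:(lia).
    have := R k'.+1 hk'm; have := H1 k'.+1 hk'm; have := H2 k' hk'm; lia.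
  - have -> : k'.+1 = k by lia.
    split => //; have := R k hk; have := H1 k hk; lia.
case: (boolP (e 0%N < 0)) => he0.
  have N := negp 0%N ltac:(lia) he0.
  apply: (core (c := -2)) => //.
  - move=> k hk; have := N k ltac:(lia) hk; have := R k hk; lia.
  - by move=> k hk; have := H2 k hk; lia.
have {}he0 : 0 < e 0%N by have := R 0%N ltac:(lia); lia.
case: (boolP [exists k : 'I_m, e k < 0]) => [/existsP ex|].
  have exP : exists k, (k < m)%N && (e k < 0).
    by case: ex => k hk; exists k; rewrite ltn_ord.
  case: (ex_minnP exP) => K /andP[hKm heK] Kmin.
  have posb : forall k, (k < K)%N -> 0 < e k /\ 0 < o k.
    move=> k hk.
    have hek : 0 <= e k.
      case: (boolP (e k < 0)) => h; last lia. have := Kmin k; rewrite h andbT; lia.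
    have := R k ltac:(lia); have := H1 k ltac:(lia); lia.
  have negK := negp K hKm heK.
  destruct K as [|K]; first lia.
  have [pe po] := posb K (ltnSn K).
  have oK : o K = 1 by have := H2 K hKm; have := R K ltac:(lia); lia.
  have eK1 : e K.+1 = -1 by have := H2 K hKm; have := R K ltac:(lia); lia.
  have eK : e K <= 2 by have := H1 K ltac:(lia); lia.
  have [_ oK1n] := negK K.+1 (leqnn _) hKm.
  case: (ltnP K.+2 m) => hK2.
  + have [eK2n oK2n] := negK K.+2 ltac:(lia) hK2.
    have := H2 K.+1 hK2; have := R K.+2 hK2; have := R K.+1 hKm.
    have := IE K.+1 K.+2 ltac:(lia) hK2.
    have := IE K K.+2 ltac:(lia) hK2.
    rewrite eK1 => i1 i2 r1 r2 h2.
    have eK2 : e K.+2 = -1 by lia.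
    have oK1 : o K.+1 = -1 by lia.
    have eKv : e K = 2 by lia.
    destruct K as [|K].
    *
      have [_ o2n] := negK 2%N ltac:(lia) ltac:(lia).
      have := H1 2%N ltac:(lia); have := R 2%N ltac:(lia).
      have := IO 0%N 2%N ltac:(lia) ltac:(lia).
      have := IO 1%N 2%N ltac:(lia) ltac:(lia).
      lia.
    * have := H2 K ltac:(lia); have := R K ltac:(lia).
      have := IO K K.+1 ltac:(lia) ltac:(lia).
      lia.
  + have hmK : m = K.+2 by lia.
    subst m.
    destruct K as [|K]; first lia.
    have [p1 p2] := posb K ltac:(lia).
    have [p3 p4] := posb K.+1 ltac:(lia).
    have := H2 K ltac:(lia); have := H1 K ltac:(lia); have := H1 K.+1 ltac:(lia).
    have := R K ltac:(lia); have := R K.+1 ltac:(lia).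
    have := IO K K.+1 ltac:(lia) ltac:(lia).
    have := IE K K.+1 ltac:(lia) ltac:(lia).
    have := IE K K.+2 ltac:(lia) ltac:(lia).
    lia.
rewrite negb_exists => /forallP allp.
have pos : forall k, (k < m)%N -> 0 < e k /\ 0 < o k.
  move=> k hk; have := allp (Ordinal hk); rewrite /= => h.
  have := R k hk; have := H1 k hk; lia.
apply: (core (c := 1)) => //.
- move=> k hk; have := pos k hk; have := R k hk; lia.
- by move=> k hk; have := H2 k hk; lia.
Qed.

Definition cong (n : nat) (x y : int) := exists t : int, x = y + t * n%:Z.

Lemma mc (t: int) (n:nat) : (0 < n)%N -> (t = 0 /\ t * n%:Z = 0) \/ (t = 1 /\ t * n%:Z = n%:Z) \/ (t = -1 /\ t * n%:Z = - n%:Z) \/ (2 * n%:Z <= t * n%:Z) \/ (t * n%:Z <= - (2 * n%:Z)).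
Proof. move=> Hn.
have : t = 0 \/ t = 1 \/ t = -1 \/ 2 <= t \/ t <= -2 by lia.
case=> [->|[->|[->|[h|h]]]]; try lia.
- right; right; right; left. nia.
- right; right; right; right. nia.
Qed.

Lemma cong_small n x y : (0 < n)%N -> cong n x y -> - n%:Z < x - y < n%:Z -> x = y.
Proof. move=> hn [t ->] h. have := mc t hn. lia. Qed.

Lemma cong_refl n x : cong n x x.
Proof. by exists 0; lia. Qed.

Lemma cong_sym n x y : cong n x y -> cong n y x.
Proof. by case=> t ->; exists (- t); lia. Qed.

Lemma cong_trans n x y z : cong n x y -> cong n y z -> cong n x z.
Proof. by case=> t ->; case=> t' ->; exists (t + t'); lia. Qed.

Lemma cong_addr n x y z : cong n x y -> cong n (x + z) (y + z).
Proof. by case=> t ->; exists t; lia. Qed.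

Lemma cong_addn n x y : x = y + n%:Z -> cong n x y.
Proof. by move=> ->; exists 1; lia. Qed.

Lemma cong_eqlin n x y x' y' : cong n x y -> x' - y' = x - y -> cong n x' y'.
Proof. by case=> t h1 h2; exists t; lia. Qed.

Lemma mdiffP n a b : (0 < n)%N ->
  (mdiff n a b < n)%N /\ cong n b%:Z (a%:Z + (mdiff n a b)%:Z).
Proof.
move=> hn; rewrite /mdiff; set z := (_ - _)%R.
have nz : (n%:Z != 0) by lia.
have h0 := modz_ge0 z nz.
have h1 := ltz_pmod z (_ : 0 < n%:Z).
have e := gez0_abs h0.
have hz := divz_eq z n%:Z.
split.
  have : (`|(z %% n%:Z)%Z|%N : int) < n%:Z by rewrite e; apply: h1; lia.
  lia.
exists (z %/ n%:Z)%Z; rewrite e; rewrite /z in hz; lia.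
Qed.

Definition near (m n a b : nat) := (m.-1 <= mdiff n a b <= m.+1)%N.

Lemma near_cong m n a b : near m n a b -> (0 < n)%N ->
  -1 <= (mdiff n a b)%:Z - m%:Z <= 1 /\
  cong n b%:Z (a%:Z + m%:Z + ((mdiff n a b)%:Z - m%:Z)).
Proof.
rewrite /near => h hn; have [_ c] := mdiffP a b hn; split; first lia.
by apply: cong_eqlin c _; lia.
Qed.

Lemma mdiff_add n a b : (0 < n)%N ->
  (mdiff n a b + mdiff n b a = 0 \/ mdiff n a b + mdiff n b a = n)%N.
Proof.
move=> hn; have [h1 [t e1]] := mdiffP a b hn; have [h2 [t' e2]] := mdiffP b a hn.
have := mc (t + t') hn. lia.
Qed.

Lemma near_sym m n a b : (n = 2 * m)%N -> (3 <= m)%N -> near m n a b -> near m n b a.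
Proof.
rewrite /near => hn hm h; have hn0 : (0 < n)%N by lia.
have := mdiff_add a b hn0; have := mdiffP b a hn0; lia.
Qed.

Lemma dist_near m n a b : (n = 2 * m)%N -> (3 <= m)%N -> (m.-1 <= dist n a b)%N -> near m n a b.
Proof.
rewrite /near /dist => hn hm h; have hn0 : (0 < n)%N by lia.
have := mdiff_add a b hn0; have := mdiffP b a hn0; have := mdiffP a b hn0.
move: h; rewrite leq_min; lia.
Qed.

Lemma cong_eq n a b : (0 < n)%N -> (1 <= a <= n)%N -> (1 <= b <= n)%N ->
  cong n a%:Z b%:Z -> a = b.
Proof. move=> hn ha hb c; have := cong_small hn c; lia. Qed.

Lemma to_sym_range n x : (0 < n)%N -> (1 <= to_sym n x <= n)%N.
Proof. move=> hn; rewrite /to_sym; have := @div.ltn_pmod (x + n.-1)%N n hn; move: ((x + n.-1) %% n)%N => y; lia. Qed.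

Lemma to_sym_cong n x : (0 < n)%N -> cong n (to_sym n x)%:Z x%:Z.
Proof.
move=> hn; rewrite /to_sym; have := divn_eq (x + n.-1)%N n.
exists (1 - ((x + n.-1) %/ n)%:Z); lia.
Qed.

Lemma sum_diff n (f : nat -> nat) j : (0 < n)%N ->
  cong n (\sum_(k < j) diff_row n f k)%N%:Z ((f j)%:Z - (f 0%N)%:Z).
Proof.
move=> hn; elim: j => [|j IH]; first by rewrite big_ord0; exists 0; lia.
rewrite big_ord_recr /= PoszD; case: IH => t ->.
have [_ [t' e']] := mdiffP (f j) (f j.+1) hn.
exists (t - t'); rewrite /diff_row; lia.
Qed.

Lemma bigmin_le_seq (I : eqType) (r : seq I) (x : nat) (F : I -> nat) i :
  i \in r -> (\big[minn/x]_(k <- r) F k <= F i)%N.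
Proof.
elim: r => // a r IH; rewrite in_cons big_cons => /orP[/eqP ->|h].
  exact: geq_minl.
exact: leq_trans (geq_minr _ _) (IH h).
Qed.

Lemma bigmin_le (N x : nat) (F : nat -> nat) j : (j < N)%N ->
  (\big[minn/x]_(i < N) F i <= F j)%N.
Proof.
move=> hj; have := @bigmin_le_seq _ (index_enum 'I_N) x (fun i : 'I_N => F i) (Ordinal hj).
by apply; rewrite mem_index_enum.
Qed.

Lemma lat_inj n u j j' : (0 < n)%N -> latin_row n u -> (j < n)%N -> (j' < n)%N ->
  cong n (u j)%:Z (u j')%:Z -> j = j'.
Proof.
move=> hn [R I] hj hj' c; apply: I => //; apply: cong_eq c => //; [exact: R|exact: R].
Qed.

Definition goodrow m n (u : nat -> nat) := forall j, (j.+1 < n)%N -> near m n (u j) (u j.+1).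

Definition framed m n (u : nat -> nat) (b : int) (e o : nat -> int) :=
  forall k, (k < m)%N -> cong n (u (2 * k)%N)%:Z (b + k%:Z + e k) /\
                         cong n (u (2 * k).+1)%:Z (b + k%:Z + m%:Z + o k).

Lemma frame_inj m n u b e o : n = (2 * m)%N -> (3 <= m)%N -> latin_row n u ->
  framed m n u b e o ->
  [/\ (forall k k', (k < k')%N -> (k' < m)%N -> k%:Z + e k != k'%:Z + e k'),
      (forall k k', (k < k')%N -> (k' < m)%N -> k%:Z + o k != k'%:Z + o k'),
      (m.-1)%:Z + e m.-1 != m%:Z + o 0%N &
      e 0%N != o m.-1 - 1].
Proof.
move=> hn hm L F; have hn0 : (0 < n)%N by lia.
split.
- move=> k k' hk hk'; apply/eqP => h.
  have [c1 _] := F k ltac:(lia); have [c2 _] := F k' hk'.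
  have c : cong n (u (2 * k)%N)%:Z (u (2 * k')%N)%:Z.
    apply: cong_trans c1 _; apply: cong_sym; apply: cong_eqlin c2 _; lia.
  have := lat_inj hn0 L (_ : (2 * k < n)%N) (_ : (2 * k' < n)%N) c; lia.
- move=> k k' hk hk'; apply/eqP => h.
  have [_ c1] := F k ltac:(lia); have [_ c2] := F k' hk'.
  have c : cong n (u (2 * k).+1)%:Z (u (2 * k').+1)%:Z.
    apply: cong_trans c1 _; apply: cong_sym; apply: cong_eqlin c2 _; lia.
  have := lat_inj hn0 L (_ : ((2 * k).+1 < n)%N) (_ : ((2 * k').+1 < n)%N) c; lia.
- apply/eqP => h.
  have [c1 _] := F m.-1 ltac:(lia); have [_ c2] := F 0%N ltac:(lia).
  have c : cong n (u (2 * m.-1)%N)%:Z (u (2 * 0).+1)%:Z.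
    apply: cong_trans c1 _; apply: cong_sym; apply: cong_eqlin c2 _; lia.
  have := lat_inj hn0 L (_ : ((2 * m.-1) < n)%N) (_ : ((2 * 0).+1 < n)%N) c; lia.
- apply/eqP => h.
  have [c1 _] := F 0%N ltac:(lia); have [_ c2] := F m.-1 ltac:(lia).
  have c : cong n (u (2 * 0)%N)%:Z (u (2 * m.-1).+1)%:Z.
    apply: cong_trans c1 _; apply: cong_sym.
    case: c2 => t ->; exists (t + 1); lia.
  have := lat_inj hn0 L (_ : ((2 * 0) < n)%N) (_ : ((2 * m.-1).+1 < n)%N) c; lia.
Qed.

Lemma frame_h m n u b e o : n = (2 * m)%N -> (3 <= m)%N -> goodrow m n u ->
  framed m n u b e o ->
  (forall k, (k < m)%N -> exists d, -1 <= d <= 1 /\ cong n (o k) (e k + d)) /\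
  (forall k, (k.+1 < m)%N -> exists d, -1 <= d <= 1 /\ cong n (e k.+1 + 1) (o k + d)).
Proof.
move=> hn hm G F; have hn0 : (0 < n)%N by lia.
split.
- move=> k hk; have [c1 c2] := F k hk.
  have [hd c] := near_cong (G (2 * k)%N ltac:(lia)) hn0.
  eexists; split; first exact: hd.
  case: c1 => t1 e1; case: c2 => t2 e2; case: c => t3 e3.
  exists (t1 + t3 - t2); lia.
- move=> k hk; have [_ c1] := F k ltac:(lia); have [c2 _] := F k.+1 hk.
  have hg := G (2 * k).+1 ltac:(lia).
  rewrite (_ : ((2 * k).+1).+1 = 2 * k.+1)%N in hg; last lia.
  have [hd c] := near_cong hg hn0.
  eexists; split; first exact: hd.
  case: c1 => t1 e1; case: c2 => t2 e2; case: c => t3 e3.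
  exists (t1 + t3 - t2 + 1); lia.
Qed.

Definition Apat m n (s : nat -> nat) (a : int) :=
  forall k, (k < m)%N -> cong n (s (2 * k)%N)%:Z (a + k%:Z) /\
                         cong n (s (2 * k).+1)%:Z (a + k%:Z + m%:Z).

Lemma parity m j : (j < 2 * m)%N -> exists k, (k < m)%N /\ (j = 2 * k \/ j = (2 * k).+1)%N.
Proof. move=> hj; exists (j %/ 2)%N; lia. Qed.

Definition dlt m n (s u : nat -> nat) j : int := (mdiff n (s j) (u j))%:Z - m%:Z.

Lemma delta_frame m n s a u : n = (2 * m)%N -> (3 <= m)%N -> Apat m n s a ->
  latin_row n u -> goodrow m n u -> (forall j, (j < n)%N -> near m n (s j) (u j)) ->
  let x := dlt m n s u in
  [/\ forall j, (j < n)%N -> -1 <= x j <= 1 /\ cong n (u j)%:Z ((s j)%:Z + m%:Z + x j),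
      framed m n u (a + m%:Z) (fun k => x (2 * k)%N) (fun k => x (2 * k).+1),
      forall k, (k < m)%N -> -1 <= x (2 * k).+1 - x (2 * k)%N <= 1 &
      forall k, (k.+1 < m)%N -> -2 <= x (2 * k.+1)%N - x (2 * k).+1 <= 0].
Proof.
move=> hn hm A L G N x; have hn0 : (0 < n)%N by lia.
have Nj : forall j, (j < n)%N -> -1 <= x j <= 1 /\ cong n (u j)%:Z ((s j)%:Z + m%:Z + x j).
  by move=> j hj; exact: near_cong (N j hj) hn0.
have F : framed m n u (a + m%:Z) (fun k => x (2 * k)%N) (fun k => x (2 * k).+1).
  move=> k hk; have [a1 a2] := A k hk.
  have [_ c1] := Nj (2 * k)%N ltac:(lia); have [_ c2] := Nj (2 * k).+1 ltac:(lia).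
  split.
  - case: a1 => t1 e1; case: c1 => t2 e2; exists (t1 + t2); lia.
  - case: a2 => t1 e1; case: c2 => t2 e2; exists (t1 + t2); lia.
have [H1 H2] := frame_h hn hm G F.
split => //.
- move=> k hk; have [d [hd c]] := H1 k hk.
  have r1 := proj1 (Nj (2 * k)%N ltac:(lia)); have r2 := proj1 (Nj (2 * k).+1 ltac:(lia)).
  have := cong_small hn0 c; lia.
- move=> k hk; have [d [hd c]] := H2 k hk.
  have r1 := proj1 (Nj (2 * k.+1)%N ltac:(lia)); have r2 := proj1 (Nj (2 * k).+1 ltac:(lia)).
  have := cong_small hn0 c; lia.
Qed.

Lemma rowB m n s a u (e0 : int) : n = (2 * m)%N -> (3 <= m)%N -> Apat m n s a ->
  latin_row n u -> goodrow m n u -> (forall j, (j < n)%N -> near m n (s j) (u j)) ->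
  -1 <= e0 <= 1 ->
  (forall j, (j < n)%N -> ~ cong n (u j)%:Z ((s j)%:Z + m%:Z + e0)) ->
  exists c : int, forall j, (j < n)%N -> cong n (u j)%:Z ((s j)%:Z + c).
Proof.
move=> hn hm A L G N he0 Ne.
have hn0 : (0 < n)%N by lia.
have [Nj F H1 H2] := delta_frame hn hm A L G N.
set x := dlt m n s u in Nj F H1 H2.
have xne : forall j, (j < n)%N -> x j != e0.
  move=> j hj; apply/eqP => h; apply: (Ne j hj); rewrite -h; exact: proj2 (Nj j hj).
have [IE IO X1 X2] := frame_inj hn hm L F.
have cst : forall k, (k < m)%N -> x (2 * k)%N = x (2 * 0)%N /\ x (2 * k).+1 = x (2 * 0)%N.
  have RR : forall k, (k < m)%N -> -1 <= x (2 * k)%N <= 1 /\ x (2 * k)%N != e0 /\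
      -1 <= x (2 * k).+1 <= 1 /\ x (2 * k).+1 != e0.
    move=> k hk; have := Nj (2 * k)%N ltac:(lia); have := Nj (2 * k).+1 ltac:(lia).
    have := xne (2 * k)%N ltac:(lia); have := xne (2 * k).+1 ltac:(lia). lia.
  have H2' : forall k, (k.+1 < m)%N -> x (2 * k.+1)%N <= x (2 * k).+1.
    by move=> k hk; have := H2 k hk; lia.
  have IEc : forall k, (k.+1 < m)%N -> k%:Z + x (2 * k)%N != k.+1%:Z + x (2 * k.+1)%N.
    by move=> k hk; apply: IE.
  have IOc : forall k, (k.+1 < m)%N -> k%:Z + x (2 * k).+1 != k.+1%:Z + x (2 * k.+1).+1.
    by move=> k hk; apply: IO.
  have : e0 = -1 \/ e0 = 0 \/ e0 = 1 by lia.
  case=> [E|[E|E]].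
  - apply: (core (c := 0) (e := fun k => x (2 * k)%N) (o := fun k => x (2 * k).+1) hm _ H2' IEc IOc X1 X2).
    move=> k hk /=; have := RR k hk; lia.
  - apply: (wlem (e := fun k => x (2 * k)%N) (o := fun k => x (2 * k).+1) hm _ H1 H2 IE IO X1 X2).
    move=> k hk /=; have := RR k hk; lia.
  - apply: (core (c := -1) (e := fun k => x (2 * k)%N) (o := fun k => x (2 * k).+1) hm _ H2' IEc IOc X1 X2).
    move=> k hk /=; have := RR k hk; lia.
exists (m%:Z + x (2 * 0)%N) => j hj.
have hj2 : (j < 2 * m)%N by lia.
have [k [hk hjk]] := parity hj2.
have [c1 c2] := cst k hk.
have := proj2 (Nj j hj); case: hjk => -> [t e]; exists t; lia.
Qed.

Lemma rowT m n s a u v : n = (2 * m)%N -> (3 <= m)%N -> Apat m n s a ->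
  latin_row n u -> goodrow m n u -> latin_row n v -> goodrow m n v ->
  (forall j, (j < n)%N -> near m n (s j) (u j)) ->
  (forall j, (j < n)%N -> near m n (u j) (v j)) ->
  (forall j, (j < n)%N -> ~ cong n (v j)%:Z (s j)%:Z) ->
  exists c : int, forall j, (j < n)%N -> cong n (u j)%:Z ((s j)%:Z + c).
Proof.
move=> hn hm A Lu Gu Lv Gv Nsu Nuv Nvs.
have hn0 : (0 < n)%N by lia.
have [Nj F H1 H2] := delta_frame hn hm A Lu Gu Nsu.
set x := dlt m n s u in Nj F H1 H2.
set y := dlt m n u v.
have Ny : forall j, (j < n)%N -> -1 <= y j <= 1 /\ cong n (v j)%:Z ((u j)%:Z + m%:Z + y j).
  by move=> j hj; exact: near_cong (Nuv j hj) hn0.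
set w := fun j => x j + y j.
have Fv : framed m n v a (fun k => w (2 * k)%N) (fun k => w (2 * k).+1).
  move=> k hk; have [a1 a2] := A k hk.
  have [_ c1] := Nj (2 * k)%N ltac:(lia); have [_ c2] := Nj (2 * k).+1 ltac:(lia).
  have [_ d1] := Ny (2 * k)%N ltac:(lia); have [_ d2] := Ny (2 * k).+1 ltac:(lia).
  rewrite /w; split.
  - case: a1 => t1 e1; case: c1 => t2 e2; case: d1 => t3 e3; exists (t1 + t2 + t3 + 1); lia.
  - case: a2 => t1 e1; case: c2 => t2 e2; case: d2 => t3 e3; exists (t1 + t2 + t3 + 1); lia.
have [IE IO X1 X2] := frame_inj hn hm Lv Fv.
have [H1v H2v] := frame_h hn hm Gv Fv.
have wne : forall j, (j < n)%N -> w j != 0.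
  move=> j hj; apply/eqP => h; apply: (Nvs j hj).
  have [_ c1] := Nj j hj; have [_ d1] := Ny j hj.
  case: c1 => t1 e1; case: d1 => t2 e2; exists (t1 + t2 + 1); rewrite /w in h; lia.
have RW : forall k, (k < m)%N -> (-2 <= w (2 * k)%N <= 2) /\ w (2 * k)%N != 0 /\
    (-2 <= w (2 * k).+1 <= 2) /\ w (2 * k).+1 != 0.
  move=> k hk; have := wne (2 * k)%N ltac:(lia); have := wne (2 * k).+1 ltac:(lia).
  have := Nj (2 * k)%N ltac:(lia); have := Nj (2 * k).+1 ltac:(lia).
  have := Ny (2 * k)%N ltac:(lia); have := Ny (2 * k).+1 ltac:(lia).
  rewrite /w; lia.
have H1w : forall k, (k < m)%N -> -1 <= w (2 * k).+1 - w (2 * k)%N <= 1.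
  move=> k hk; have [d [hd c]] := H1v k hk.
  have := RW k hk; have := cong_small hn0 c; lia.
have H2w : forall k, (k.+1 < m)%N -> -2 <= w (2 * k.+1)%N - w (2 * k).+1 <= 0.
  move=> k hk; have [d [hd [t c]]] := H2v k hk.
  have := RW k ltac:(lia); have := RW k.+1 hk; have := H2 k hk.
  have := Nj (2 * k.+1)%N ltac:(lia); have := Nj (2 * k).+1 ltac:(lia).
  have := Ny (2 * k.+1)%N ltac:(lia); have := Ny (2 * k).+1 ltac:(lia).
  have := mc t hn0. rewrite /w in c *. lia.
have cst := wlem (e := fun k => w (2 * k)%N) (o := fun k => w (2 * k).+1) hm RW H1w H2w IE IO X1 X2.
have wc : forall j, (j < n)%N -> w j = w (2 * 0)%N.
  move=> j hj; have hj2 : (j < 2 * m)%N by lia.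
  have [k [hk hjk]] := parity hj2; have [c1 c2] := cst k hk.
  by case: hjk => ->.
have w0 := RW 0%N ltac:(lia).
have : 0 < w (2 * 0)%N \/ w (2 * 0)%N < 0 by lia.
case=> hw.
- apply: (rowB (e0 := -1) hn hm A Lu Gu Nsu) => //.
  move=> j hj c; have [r1 c1] := Nj j hj; have [r2 _] := Ny j hj.
  have := wc j hj => h; have hwj : w j = x j + y j by [].
  have c2 : cong n ((s j)%:Z + m%:Z + x j) ((s j)%:Z + m%:Z + -1).
    exact: cong_trans (cong_sym c1) c.
  have := cong_small hn0 c2; lia.
- apply: (rowB (e0 := 1) hn hm A Lu Gu Nsu) => //.
  move=> j hj c; have [r1 c1] := Nj j hj; have [r2 _] := Ny j hj.
  have := wc j hj => h; have hwj : w j = x j + y j by [].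
  have c2 : cong n ((s j)%:Z + m%:Z + x j) ((s j)%:Z + m%:Z + 1).
    exact: cong_trans (cong_sym c1) c.
  have := cong_small hn0 c2; lia.
Qed.

Lemma Apat_tr m n s a u c : Apat m n s a ->
  (forall j, (j < n)%N -> cong n (u j)%:Z ((s j)%:Z + c)) -> (2 * m <= n)%N ->
  Apat m n u (a + c).
Proof.
move=> A T hn k hk; have [a1 a2] := A k hk.
have [t1 e1] := T (2 * k)%N ltac:(lia); have [t2 e2] := T (2 * k).+1 ltac:(lia).
split.
- case: a1 => t e; exists (t1 + t); lia.
- case: a2 => t e; exists (t2 + t); lia.
Qed.

Lemma odd2k k : odd (2 * k)%N = false.
Proof. by rewrite oddM. Qed.

Lemma odd2k1 k : odd (2 * k).+1 = true.
Proof. by rewrite -addn1 oddD oddM. Qed.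

Close Scope ring_scope.
Unset Implicit Arguments.

Theorem mainTheorem18 (n : nat) (L : nat -> nat -> nat) :
  6 <= n -> ~~ odd n ->
  latin_square n L ->
  inner_distance n L = n./2 - 1 ->
  (exists i, i < n /\ forall j, j < n -> ext_diff_row n (L i) j = rowA n j) ->
  row_product n L.
Proof.
move=> h6 hev [LR LC] hid [r [hr hA]].
set m := n./2.
have hn : n = (2 * m)%N.
  by have := odd_double_half n; rewrite (negbTE hev) /= -mul2n add0n => ->.
have hm : (3 <= m)%N by lia.
have hid2 : inner_distance n L = m.-1 by rewrite hid; lia.
clear hid; clearbody m.
have hn0 : (0 < n)%N by lia.
have [hA1 hB1] : (m.-1 <= \big[minn/n]_(i < n) \big[minn/n]_(j < n.-1) dist n (L i j) (L i j.+1))%N /\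
   (m.-1 <= \big[minn/n]_(i < n.-1) \big[minn/n]_(j < n) dist n (L i j) (L i.+1 j))%N.
  move: hid2; rewrite /inner_distance.
  move: (\big[minn/n]_(i < n) _)%N (\big[minn/n]_(i < n.-1) _)%N => A B; lia.
have hH : forall i j, (i < n)%N -> (j.+1 < n)%N -> near m n (L i j) (L i j.+1).
  move=> i j hi hj; apply: dist_near hn hm _.
  have h1 : (\big[minn/n]_(i < n) \big[minn/n]_(j < n.-1) dist n (L i j) (L i j.+1) <=
     \big[minn/n]_(j < n.-1) dist n (L i j) (L i j.+1))%N :=
    bigmin_le n (fun i => \big[minn/n]_(j < n.-1) dist n (L i j) (L i j.+1)) hi.
  have h2 : (\big[minn/n]_(j < n.-1) dist n (L i j) (L i j.+1) <= dist n (L i j) (L i j.+1))%N :=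
    bigmin_le n (fun j => dist n (L i j) (L i j.+1)) (_ : (j < n.-1)%N).
  lia.
have hV : forall i j, (i.+1 < n)%N -> (j < n)%N -> near m n (L i j) (L i.+1 j).
  move=> i j hi hj; apply: dist_near hn hm _.
  have h1 : (\big[minn/n]_(i < n.-1) \big[minn/n]_(j < n) dist n (L i j) (L i.+1 j) <=
     \big[minn/n]_(j < n) dist n (L i j) (L i.+1 j))%N :=
    bigmin_le n (fun i => \big[minn/n]_(j < n) dist n (L i j) (L i.+1 j)) (_ : (i < n.-1)%N).
  have h2 : (\big[minn/n]_(j < n) dist n (L i j) (L i.+1 j) <= dist n (L i j) (L i.+1 j))%N :=
    bigmin_le n (fun j => dist n (L i j) (L i.+1 j)) hj.
  lia.
have G : forall i, (i < n)%N -> goodrow m n (L i).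
  by move=> i hi j hj; apply: hH.
have CD : forall i i' j, (i < n)%N -> (i' < n)%N -> (j < n)%N ->
    cong n (L i j)%:Z (L i' j)%:Z -> i = i'.
  move=> i i' j hi hi' hj c; exact: (lat_inj hn0 (LC j hj) hi hi' c).
have hstep : forall j, (j.+1 < n)%N -> cong n (L r j.+1)%:Z ((L r j)%:Z + m%:Z + (odd j)%:Z).
  move=> j hj; have := hA j ltac:(lia); rewrite /ext_diff_row /rowA.
  have -> : (j < n.-1)%N by lia.
  rewrite /diff_row => h.
  have [_ c] := mdiffP (L r j) (L r j.+1) hn0.
  apply: cong_eqlin c _; rewrite -/m in h; lia.
have Ar : Apat m n (L r) (L r 0%N)%:Z.
  elim=> [|k IH] hk.
    rewrite muln0; split; first by exists 0; lia.
    have := hstep 0%N ltac:(lia); case=> t e; exists t; lia.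
  have [a1 a2] := IH ltac:(lia).
  have h1 := hstep (2 * k).+1 ltac:(lia).
  rewrite (_ : ((2 * k).+1).+1 = 2 * k.+1)%N in h1; last lia.
  have h2 := hstep (2 * k.+1)%N ltac:(lia).
  move: h1 h2; rewrite odd2k odd2k1 => h1 h2.
  have c1 : cong n (L r (2 * k.+1)%N)%:Z ((L r 0%N)%:Z + k.+1%:Z).
    case: h1 => t e; case: a2 => t' e'; exists (t + t' + 1)%R; lia.
  split => //.
  case: h2 => t e; case: c1 => t' e'; exists (t + t')%R; lia.
pose P i := exists c : int, forall j, (j < n)%N -> cong n (L i j)%:Z ((L r j)%:Z + c).
have AP : forall i, P i -> exists a, Apat m n (L i) a.
  move=> i [c hc]; exists ((L r 0%N)%:Z + c)%R; apply: Apat_tr Ar hc _; lia.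
have Pcomp : forall i i' c, P i -> (forall j, (j < n)%N -> cong n (L i' j)%:Z ((L i j)%:Z + c)) -> P i'.
  move=> i i' c [c0 h0] h; exists (c0 + c)%R => j hj.
  case: (h0 j hj) => t e; case: (h j hj) => t' e'; exists (t + t')%R; lia.
have down : forall k, (k.+2 < n)%N -> P k -> P k.+1.
  move=> k hk Pk; have [a A] := AP k Pk.
  have [c hc] := rowT hn hm A (LR k.+1 ltac:(lia)) (G k.+1 ltac:(lia)) (LR k.+2 hk) (G k.+2 hk)
    (fun j hj => hV k j ltac:(lia) hj) (fun j hj => hV k.+1 j hk hj)
    (fun j hj c => ltac:(have := CD _ _ _ hk (_ : (k < n)%N) hj c; lia)).
  exact: Pcomp Pk hc.
have up : forall k, (k.+2 < n)%N -> P k.+2 -> P k.+1.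
  move=> k hk Pk; have [a A] := AP k.+2 Pk.
  have [c hc] := rowT hn hm A (LR k.+1 ltac:(lia)) (G k.+1 ltac:(lia)) (LR k ltac:(lia)) (G k ltac:(lia))
    (fun j hj => near_sym hn hm (hV k.+1 j hk hj))
    (fun j hj => near_sym hn hm (hV k j ltac:(lia) hj))
    (fun j hj c => ltac:(have := CD _ _ _ (_ : (k < n)%N) hk hj c; lia)).
  exact: Pcomp Pk hc.
have Pr : P r by exists 0 => j hj; exists 0; lia.
have Pmid : forall i, (1 <= i)%N -> (i.+1 < n)%N -> P i.
  move=> i hi1 hi.
  case: (leqP r i) => hri.
  - have : forall d, ((r + d).+1 < n)%N -> P (r + d).
      elim=> [|d IH] hd; first by rewrite addn0.
      rewrite addnS; apply: down; first lia.
      apply: IH; lia.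
    by move/(_ (i - r)%N); rewrite subnKC //; apply.
  - have : forall d, (d.+1 <= r)%N -> P (r - d)%N.
      elim=> [|d IH] hd; first by rewrite subn0.
      have := IH ltac:(lia).
      rewrite (_ : (r - d = (r - d.+2).+2)%N); last lia.
      move=> h; have := up (r - d.+2)%N ltac:(lia) h.
      by rewrite (_ : ((r - d.+2).+1 = r - d.+1)%N); last lia.
    by move/(_ (r - i)%N ltac:(lia)); rewrite subKn //; lia.
have bnd : forall b k1 k2, (b < n)%N -> (k1 < n)%N -> (k2 < n)%N -> b != k2 ->
    P k1 -> P k2 -> (forall j, (j < n)%N -> near m n (L k1 j) (L b j)) ->
    near m n (L k1 0%N) (L k2 0%N) -> P b.
  move=> b k1 k2 hb hk1 hk2 hbk P1 P2 N1 N12.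
  have [a A] := AP k1 P1.
  have [he0 ce0] := near_cong N12 hn0.
  have Ne : forall j, (j < n)%N -> ~ cong n (L b j)%:Z ((L k1 j)%:Z + m%:Z + dlt m n (L k1) (L k2) 0%N)%R.
    move=> j hj c.
    case: P1 => c1 h1; case: P2 => c2 h2.
    have cc : cong n (L b j)%:Z (L k2 j)%:Z.
      case: c => t e; case: (h1 j hj) => t1 e1; case: (h2 j hj) => t2 e2.
      case: (h1 0%N hn0) => t3 e3; case: (h2 0%N hn0) => t4 e4; case: ce0 => t5 e5.
      exists (t + t1 - t2 + t4 - t3 - t5)%R; rewrite /dlt in e; lia.
    have := CD _ _ _ hb hk2 hj cc; move/eqP: hbk; lia.
  have [c hc] := rowB hn hm A (LR b hb) (G b hb) N1 he0 Ne.
  exact: Pcomp P1 hc.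
have P0 : P 0%N.
  case: (posnP r) => [r0|rpos]; first by rewrite -r0.
  apply: (bnd 0%N 1%N 2%N) => //; try lia.
  - apply: Pmid; lia.
  - apply: Pmid; lia.
  - by move=> j hj; apply: near_sym hn hm (hV 0%N j _ hj); lia.
  - by apply: hV; lia.
have Pn1 : P n.-1.
  case: (eqVneq r n.-1) => [<-|rn]; first exact: Pr.
  apply: (bnd n.-1 n.-2 (n - 3)%N); try lia.
  - apply: Pmid; lia.
  - apply: Pmid; lia.
  - move=> j hj; have := hV n.-2 j ltac:(lia) hj.
    by rewrite (_ : (n.-2).+1 = n.-1)%N; last lia.
  - apply: near_sym hn hm _; have := hV (n - 3)%N 0%N ltac:(lia) hn0.
    by rewrite (_ : ((n - 3)%N).+1 = n.-2)%N; last lia.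
have Pall : forall i, (i < n)%N -> P i.
  move=> i hi; case: (posnP i) => [->|ipos] //.
  case: (eqVneq i n.-1) => [->|ine] //.
  apply: Pmid; lia.
exists (L 0%N), (fun i => L i 0%N), (L 0%N 0%N - 1)%N.
split; first exact: LR 0%N hn0.
split; first exact: LC 0%N hn0.
move=> i j hi hj.
have [R1 _] := LR i hi.
have [R0 _] := LR 0%N hn0.
apply: (cong_eq hn0 (R1 j hj) (to_sym_range _ hn0)).
have := R0 0%N hn0 => r00.
set X := (prodm _ _ _ i j + _)%N.
have c1 := to_sym_cong X hn0.
rewrite /X /prodm in c1.
have c2 := to_sym_cong (1 + \sum_(k < i) diff_row n (fun i0 => L i0 0%N) k +
                          \sum_(k < j) diff_row n (L 0%N) k)%N hn0.
have /= c3 := sum_diff (fun i0 => L i0 0%N) i hn0.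
have /= c4 := sum_diff (L 0%N) j hn0.
have [ci hci] := Pall i hi; have [c0 hc0] := Pall 0%N hn0.
case: (hci j hj) => t1 e1; case: (hci 0%N hn0) => t2 e2.
case: (hc0 j hj) => t3 e3; case: (hc0 0%N hn0) => t4 e4.
case: c1 => t5 e5; case: c2 => t6 e6; case: c3 => t7 e7; case: c4 => t8 e8.
apply: cong_sym.
rewrite /X /prodm; exists (t5 + t6 + t7 + t8 - t1 + t2 + t3 - t4)%R.
rewrite e5 PoszD e6 !PoszD e7 e8. lia.
Qed.
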